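(* Let $(G,c)$ be an instance of min-cost 2ECSS and $(G',c')$ its inflation. For $x\in P_{EC}(G)$ define $x'\in\mathbb R^{E'}$ by $x'_{v'w'}=x_{vw}$ for each inter-clique edge $v'w'$ of $G'$ corresponding to the edge $vw$ of $G$, and $x'_{e'}=1$ for each $e'\in F'$. Then $x'\in P_{NC}(G')$ and $c'^{\top}x'=c^{\top}x$.
   Context: $G=(V,E)$ is a simple undirected graph with nonnegative edge costs $c\in\mathbb R_+^E$. $P_{EC}(G)=\{x\in\mathbb R^E: x(\delta_G(S))\ge 2\ \forall\,\emptyset\ne S\subsetneq V;\ 0\le x\le 1\}$ (the cut LP region for 2-edge connected spanning subgraphs), where $\delta_G(S)$ is the set of edges with exactly one end in $S$. Inflation: $G'=(V',E')$ is obtained by replacing each node $u$ of $G$ by a complete graph $C'_u$ on $\deg_G(u)$ new nodes (the $C'_u$ pairwise node-disjoint), and each edge $vw$ of $G$ by an edge $v'w'$ with $v'\in C'_v$, $w'\in C'_w$, such that each node of each $C'_u$ is incident to exactly one such inter-clique edge; costs: $c'_{v'w'}=c_{vw}$ and $c'_{e'}=0$ for every edge $e'$ in $F':=\bigcup_u E(C'_u)$. For a graph $H=(W,D)$ with nonnegative costs $d$, let $H^0=(W,\{e\in D: d_e=0\})$, and let $P_{NC}(H)$ (the partition LP region for 2NCSS) be the set of $x\in\mathbb R^D$ with $x(\delta_H(S))\ge 2$ for all $\emptyset\ne S\subsetneq W$, $0\le x\le 1$, and, for every node $w\in W$ and every partition $\mathcal P$ of $W\setminus\{w\}$ such that the node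 set of each connected component of $H^0-w$ is contained in a set of $\mathcal P$, $\sum_{e\in e_{H-w}(\mathcal P)}x_e\ge|\mathcal P|-1$, where $e_{H-w}(\mathcal P)$ is the set of edges of $H-w$ whose end nodes lie in different sets of $\mathcal P$. *)

(* Defs.v *)
From mathcomp Require Import all_boot all_order all_algebra.
Set Implicit Arguments. Unset Strict Implicit. Unset Printing Implicit Defensive.
Import Order.TTheory GRing.Theory Num.Theory.
Local Open Scope ring_scope.

Definition simple_graph (T : finType) (adj : rel T) : Prop :=
  symmetric adj /\ irreflexive adj.

Definition edgesG (T : finType) (adj : rel T) : {set {set T}} :=
  [set e : {set T} | [exists x, exists y, adj x y && (e == [set x; y])]].

Definition cutG (T : finType) (adj : rel T) (S : {set T}) : {set {set T}} :=
  [set e in edgesG adj | #|e :&: S| == 1%N].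

Definition xsum (R : realFieldType) (T : finType) (F : {set {set T}})
  (x : {set T} -> R) : R := \sum_(e in F) x e.

Definition costG (R : realFieldType) (T : finType) (adj : rel T)
  (c x : {set T} -> R) : R := \sum_(e in edgesG adj) c e * x e.

Definition cut_bounds (R : realFieldType) (T : finType) (adj : rel T)
  (x : {set T} -> R) : Prop :=
  (forall S : {set T}, S != set0 -> S != setT -> 2 <= xsum (cutG adj S) x) /\
  (forall e, e \in edgesG adj -> 0 <= x e <= 1).

Definition P_EC (R : realFieldType) (T : finType) (adj : rel T)
  (x : {set T} -> R) : Prop := cut_bounds adj x.

Definition adj0_minus (R : realFieldType) (T : finType) (adj : rel T)
  (d : {set T} -> R) (w : T) : rel T :=
  fun a b => [&& adj a b, d [set a; b] == 0, a != w & b != w].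

Definition comp0_minus (R : realFieldType) (T : finType) (adj : rel T)
  (d : {set T} -> R) (w a : T) : {set T} :=
  [set b | (b != w) && connect (adj0_minus adj d w) a b].

Definition cross_edges (T : finType) (adj : rel T) (w : T)
  (P : {set {set T}}) : {set {set T}} :=
  [set e in edgesG adj | (w \notin e) && ~~ [exists B in P, e \subset B]].

Definition P_NC (R : realFieldType) (T : finType) (adj : rel T)
  (d : {set T} -> R) (x : {set T} -> R) : Prop :=
  cut_bounds adj x /\
  (forall (w : T) (P : {set {set T}}),
     partition P (setT :\ w) ->
     (forall a, a != w -> exists2 B, B \in P & comp0_minus adj d w a \subset B) ->
     (#|P|%:R - 1 <= xsum (cross_edges adj w P) x)).

(* The clique C'_u consists of the nodes (u,f), f an edge of G at u;
   (u,f) is joined to every other (u,g) (clique edges F'), and to (w,f)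
   where f = uw (the inter-clique edge corresponding to f). *)
Definition inflV (T : finType) (adj : rel T) : finType :=
  {p : T * {set T} | (p.2 \in edgesG adj) && (p.1 \in p.2)}.

Definition infl_adj (T : finType) (adj : rel T) : rel (inflV adj) :=
  fun a b =>
    (((val a).1 == (val b).1) && ((val a).2 != (val b).2)) ||
    (((val a).2 == (val b).2) && ((val a).1 != (val b).1)).

(* For an edge e' of G': if it is an inter-clique edge, Some f where f is
   the corresponding edge of G; otherwise (e' in F') None. *)
Definition infl_origin (T : finType) (adj : rel T) (e' : {set inflV adj})
  : option {set T} :=
  if [pick a in e' | [exists b in e', (val b).1 != (val a).1]] is Some a
  then Some (val a).2 else None.

Definition infl_cost (R : realFieldType) (T : finType) (adj : rel T)
  (c : {set T} -> R) (e' : {set inflV adj}) : R :=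
  if infl_origin e' is Some f then c f else 0.

Definition infl_x (R : realFieldType) (T : finType) (adj : rel T)
  (x : {set T} -> R) (e' : {set inflV adj}) : R :=
  if infl_origin e' is Some f then x f else 1.

(* Main.v *)
Require Import Defs.
From mathcomp Require Import all_boot all_order all_algebra.
From mathcomp Require Import lra.
Set Implicit Arguments. Unset Strict Implicit. Unset Printing Implicit Defensive.
Import Order.TTheory GRing.Theory Num.Theory.
Local Open Scope ring_scope.

Lemma card2I (T : finType) (a b : T) (S : {set T}) : a != b ->
  (#|[set a; b] :&: S| == 1%N) = ((a \in S) != (b \in S)).
Proof.
move=> ab; apply/eqP/idP => [h|].
  apply/negP => /eqP e; move: h.
  case aS: (a \in S); move: e; rewrite aS => bS.
    have -> : [set a; b] :&: S = [set a; b].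
      apply/setIidPl; apply/subsetP => y; rewrite !inE => /orP[]/eqP->; by rewrite ?aS ?bS.
    by rewrite cards2 ab.
  have -> : [set a; b] :&: S = set0.
    apply/setP => y; rewrite !inE; apply/negbTE; apply/andP => -[/orP[]/eqP-> ]; by rewrite ?aS -?bS.
  by rewrite cards0.
case aS: (a \in S); case bS: (b \in S) => //= _.
  have -> : [set a; b] :&: S = [set a].
    apply/setP => y; rewrite !inE; case: (y =P a) => [->|] /=; first by rewrite aS.
    by case: (y =P b) => [->|] //=; rewrite bS.
  by rewrite cards1.
have -> : [set a; b] :&: S = [set b].
  apply/setP => y; rewrite !inE; case: (y =P a) => [->|] /=; first by rewrite aS; move: ab; rewrite eq_sym => /negbTE ->.
  by case: (y =P b) => [->|] //=; rewrite bS.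
by rewrite cards1.
Qed.

Lemma edgesP (T : finType) (ad : rel T) e :
  reflect (exists x y, ad x y /\ e = [set x; y]) (e \in edgesG ad).
Proof.
rewrite inE; apply: (iffP existsP) => [[x /existsP [y /andP [h /eqP ->]]]|[x [y [h ->]]]].
  by exists x, y.
by exists x; apply/existsP; exists y; rewrite h eqxx.
Qed.

Lemma xsum_set (R : realFieldType) (T : finType) (A : {set {set T}}) (p : pred {set T})
  (y : {set T} -> R) :
  xsum [set e in A | p e] y = \sum_(e in A) (if p e then y e else 0).
Proof.
rewrite /xsum [LHS]big_mkcond [RHS]big_mkcond; apply eq_bigr => e _; rewrite inE.
by case: (e \in A); case: (p e).
Qed.

Section Infl.
Variable R : realFieldType.
Variable V : finType.
Variable adj : rel V.
Hypothesis sg : simple_graph adj.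
Notation V' := (inflV adj).
Notation adj' := (@infl_adj V adj).
Notation E := (edgesG adj).
Notation E' := (edgesG adj').

Definition emb (f : {set V}) : {set V'} := [set a : V' | (val a).2 == f].

Lemma node_eq (y z : V') : (val y).1 = (val z).1 -> (val y).2 = (val z).2 -> y = z.
Proof.
move=> h1 h2; apply: val_inj; move: h1 h2; case: (val y) => ??; case: (val z) => ?? /= -> -> //.
Qed.

Lemma nodeP (a : V') : ((val a).2 \in E) /\ ((val a).1 \in (val a).2).
Proof. by case/andP: (valP a). Qed.

Lemma adj'_irr (a : V') : adj' a a = false.
Proof. by rewrite /infl_adj !eqxx. Qed.

Lemma adj'_sym (a b : V') : adj' a b = adj' b a.
Proof. by rewrite /infl_adj ![_ == (val a).1]eq_sym ![_ == (val a).2]eq_sym. Qed.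

Lemma adj'_neq (a b : V') : adj' a b -> a != b.
Proof. by apply: contraTneq => ->; rewrite adj'_irr. Qed.

Lemma edge_neq u v : adj u v -> u != v.
Proof. case: sg => _ irr; by apply: contraTneq => ->; rewrite irr. Qed.

Lemma emb_edge f : f \in E -> exists a b : V',
  [/\ (val a).2 = f, (val b).2 = f, (val a).1 != (val b).1, emb f = [set a; b]
    & f = [set (val a).1; (val b).1]].
Proof.
move=> fE; have := fE => /edgesP [u [v [uv fuv]]].
have ha : ((u, f).2 \in E) && ((u, f).1 \in (u, f).2) by rewrite /= fE fuv !inE eqxx.
have hb : ((v, f).2 \in E) && ((v, f).1 \in (v, f).2) by rewrite /= fE fuv !inE eqxx orbT.
exists (exist _ (u, f) ha), (exist _ (v, f) hb); split => //=.
- exact: edge_neq.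
- apply/setP => y; rewrite !inE; apply/idP/idP.
    move=> /eqP y2; have [_ ya] := nodeP y.
    have : (val y).1 \in [set u; v] by rewrite -fuv -y2.
    rewrite !inE => /orP[]/eqP y1.
      by apply/orP; left; apply/eqP; apply: node_eq.
    by apply/orP; right; apply/eqP; apply: node_eq.
  by case/orP => /eqP -> /=.
Qed.

Lemma emb_in_E' f : f \in E -> emb f \in E'.
Proof.
move=> /emb_edge [a [b [ha hb hab -> _]]]; apply/edgesP; exists a, b; split => //.
by rewrite /infl_adj ha hb eqxx hab orbT.
Qed.

Lemma origin_emb f : f \in E -> infl_origin (emb f) = Some f.
Proof.
move=> fE; rewrite /infl_origin; case: pickP => [a' /andP [] | H].
  by rewrite inE => /eqP ->.
have [a [b [ha hb hab eab _]]] := emb_edge fE.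
have := H a; rewrite eab !inE eqxx /=.
move/negbT/existsPn/(_ b); rewrite !inE eqxx orbT /=.
by rewrite eq_sym hab.
Qed.

Lemma origin_clique (a b : V') : (val a).1 = (val b).1 -> infl_origin [set a; b] = None.
Proof.
move=> h; rewrite /infl_origin; case: pickP => [a' /andP [ina /existsP [b' /andP [inb]]] | //].
move: ina inb; rewrite !inE => /orP[]/eqP-> /orP[]/eqP->; by rewrite ?h eqxx.
Qed.

Lemma in_emb (y : V') f : (y \in emb f) = ((val y).2 == f).
Proof. by rewrite inE. Qed.

Lemma E'_cases e : e \in E' ->
  (exists a b : V', [/\ a != b, (val a).1 = (val b).1, e = [set a; b] & infl_origin e = None])
  \/ (exists2 f, f \in E & e = emb f).
Proof.
move=> /edgesP [a [b [h ->]]].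
case/orP: h => /andP [/eqP h1 h2].
  left; exists a, b; split => //; last exact: origin_clique.
  by apply: contra_neq h2 => ->.
right; exists (val a).2; first by case: (nodeP a).
apply/setP => y; rewrite !inE; apply/idP/idP.
  case/orP => /eqP -> //; by rewrite h1.
move=> /eqP y2.
have [fE _] := nodeP a.
have := fE => /edgesP [u [v [uv fuv]]].
have [_ ya] := nodeP y; have [_ aa] := nodeP a; have [_ bb] := nodeP b.
move: ya aa bb; rewrite y2 -h1 fuv !inE.
case/orP => /eqP y1; case/orP => /eqP a1; case/orP => /eqP b1;
  try (by move: h2; rewrite a1 b1 eqxx);
  [apply/orP; left | apply/orP; right | apply/orP; right | apply/orP; left];
  apply/eqP; apply: node_eq; rewrite ?y2 ?h1 //; congruence.
Qed.


Lemma sum_E' (phi : {set V'} -> R) : \sum_(e in E') phi e =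
  \sum_(f in E) phi (emb f) + \sum_(e in E' | infl_origin e == None) phi e.
Proof.
rewrite (bigID (fun e => infl_origin e == None)) /= addrC; congr (_ + _).
transitivity (\sum_(e in emb @: E) phi e).
  apply: eq_bigl => e; apply/idP/idP => [/andP [eE no] | /imsetP [f fE ->]].
    case: (E'_cases eE) => [[a [b [_ _ _ o]]] | [f fE ->]]; first by rewrite o in no.
    exact: imset_f.
  by rewrite emb_in_E' // origin_emb.
rewrite big_imset //.
move=> f g fE gE h; have [a [b [ha _ _ _ _]]] := emb_edge fE.
have : a \in emb g by rewrite -h in_emb ha.
by rewrite in_emb ha => /eqP.
Qed.

Lemma cost_eq (c x : {set V} -> R) :
  costG adj' (infl_cost c) (infl_x x) = costG adj c x.
Proof.
rewrite /costG sum_E' [X in _ + X]big1 ?addr0.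
  by apply: eq_bigr => f fE; rewrite /infl_cost /infl_x origin_emb.
by move=> e /andP [_ /eqP o]; rewrite /infl_cost o mul0r.
Qed.

Lemma x'_bounds (x : {set V} -> R) : (forall f, f \in E -> 0 <= x f <= 1) ->
  forall e, e \in E' -> 0 <= infl_x x e <= 1.
Proof.
move=> xb e eE; case: (E'_cases eE) => [[a [b [_ _ _ o]]] | [f fE ->]].
  by rewrite /infl_x o ler01 lexx.
by rewrite /infl_x origin_emb // xb.
Qed.

Definition Cl (S' : {set V'}) :=
  [set e in E' | (infl_origin e == None) && (#|e :&: S'| == 1%N)].

Lemma cut_val (x : {set V} -> R) S' : xsum (cutG adj' S') (infl_x x) =
  \sum_(f in E) (if #|emb f :&: S'| == 1%N then x f else 0) + (#|Cl S'|)%:R.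
Proof.
rewrite /cutG xsum_set sum_E'; congr (_ + _).
  by apply: eq_bigr => f fE; rewrite /infl_x origin_emb.
have -> : (#|Cl S'|)%:R = \sum_(e in E')
    (if (infl_origin e == None) && (#|e :&: S'| == 1%N) then 1 else 0 : R).
  by rewrite -(xsum_set _ _ (fun _ => (1:R))) /xsum sumr_const.
rewrite [LHS]big_mkcond [RHS]big_mkcond; apply: eq_bigr => e _.
case: (e \in E') => //=; case: eqP => [o|] //=; by rewrite /infl_x o.
Qed.

Lemma Cl_clique (S' : {set V'}) (y z : V') : y \in S' -> z \notin S' ->
  (val y).1 = (val z).1 -> [set y; z] \in Cl S'.
Proof.
move=> yS zS h.
have yz : y != z by apply: contraTneq yS => ->.
rewrite inE; apply/andP; split.
  apply/edgesP; exists y, z; split => //.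
  rewrite /infl_adj h eqxx /=; apply/orP; left.
  by apply: contra_neq yz => h2; apply: node_eq.
by rewrite origin_clique // card2I // yS (negbTE zS).
Qed.

Definition proj (S' : {set V'}) : {set V} := [set u | [exists a in S', (val a).1 == u]].

Lemma projP (S' : {set V'}) (y : V') : y \in S' -> (val y).1 \in proj S'.
Proof. by move=> yS; rewrite inE; apply/existsP; exists y; rewrite yS eqxx. Qed.

Lemma lossL (x : {set V} -> R) S' : (forall f, f \in E -> 0 <= x f <= 1) ->
  \sum_(f in E) (if #|f :&: proj S'| == 1%N then x f else 0)
  <= \sum_(f in E) (if #|emb f :&: S'| == 1%N then x f else 0) + (#|Cl S'|)%:R.
Proof.
move=> xb; set S := proj S'.
pose L := [set f in E | (#|f :&: S| == 1%N) && (#|emb f :&: S'| != 1%N)].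
pose N := [set a : V' | (a \notin S') && ((val a).1 \in S)].
have LN : (#|L| <= #|N|)%N.
  apply: (leq_trans _ (leq_imset_card (fun a : V' => (val a).2) N)).
  apply: subset_leq_card; apply/subsetP => f; rewrite inE => /andP [fE /andP [fc ec]].
  have [a [b [ha hb hab eab fab]]] := emb_edge fE.
  have ab : a != b by apply: contra_neq hab => ->.
  move: fc ec; rewrite eab card2I // {1}fab card2I // => fc /negPn /eqP ec.
  case aS: ((val a).1 \in S); case bS: ((val b).1 \in S); rewrite ?aS ?bS // in fc.
    have bS' : b \notin S' by apply: contraFN bS; apply: projP.
    apply/imsetP; exists a; last by rewrite ha.
    by rewrite inE aS andbT ec.
  have aS' : a \notin S' by apply: contraFN aS; apply: projP.
  apply/imsetP; exists b; last by rewrite hb.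
  by rewrite inE bS andbT -ec.
have NCl : (#|N| <= #|Cl S'|)%N.
  pose r (a : V') := odflt a [pick b in S' | (val b).1 == (val a).1].
  have rP : forall a, a \in N -> (r a \in S') /\ (val (r a)).1 = (val a).1.
    move=> a; rewrite inE => /andP [_]; rewrite inE => /existsP [b /andP [bS /eqP bu]].
    rewrite /r; case: pickP => [b' /andP [b'S /eqP ->] | /(_ b)] //.
    by rewrite bS bu eqxx.
  rewrite -(@card_in_imset _ _ (fun a => [set r a; a])).
    apply: subset_leq_card; apply/subsetP => e /imsetP [a aN ->].
    have [raS ra1] := rP a aN.
    have aS' : a \notin S' by move: aN; rewrite inE => /andP [].
    exact: Cl_clique.
  move=> a a' aN a'N /= h.
  have : a \in [set r a'; a'] by rewrite -h !inE eqxx orbT.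
  rewrite !inE => /orP [/eqP ar | /eqP //].
  have [ra'S _] := rP a' a'N.
  by move: aN; rewrite inE ar ra'S.
apply: (le_trans (y := \sum_(f in E) ((if #|emb f :&: S'| == 1%N then x f else 0)
   + (if f \in L then 1 else 0)))).
  apply: ler_sum => f fE; have /andP [x0 x1] := xb f fE.
  rewrite inE fE /=.
  case: (#|f :&: S| == 1%N); case: (#|emb f :&: S'| == 1%N) => /=; lra.
rewrite big_split /= lerD2l.
rewrite -big_mkcondr /=.
have -> : \sum_(i in E | i \in L) (1 : R) = \sum_(i in L) 1.
  apply: eq_bigl => f; apply/andP/idP => [[]//|fL]; split => //; move: fL; rewrite inE => /andP[].
  by []. rewrite sumr_const ler_nat; exact: leq_trans LN NCl.
Qed.


Lemma cutG'C (S' : {set V'}) : cutG adj' (~: S') = cutG adj' S'.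
Proof.
apply/setP => e; rewrite /cutG [LHS]inE [RHS]inE; apply: andb_id2l => eE.
case/edgesP: eE => [a [b [h ->]]].
rewrite !card2I ?adj'_neq // !inE; by case: (a \in S'); case: (b \in S').
Qed.

Lemma cut' (x : {set V} -> R) :
  (forall S, S != set0 -> S != setT -> 2 <= xsum (cutG adj S) x) ->
  (forall f, f \in E -> 0 <= x f <= 1) ->
  forall S', S' != set0 -> S' != setT -> 2 <= xsum (cutG adj' S') (infl_x x).
Proof.
move=> hcut xb.
have key : forall S0, S0 != set0 -> proj S0 != setT -> 2 <= xsum (cutG adj' S0) (infl_x x).
  move=> S0 /set0Pn [a aS] np.
  have pne : proj S0 != set0 by apply/set0Pn; exists (val a).1; exact: projP.
  have := hcut _ pne np; rewrite /cutG xsum_set => h.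
  rewrite cut_val; apply: le_trans h _; exact: lossL.
move=> S' ne nT.
case: (boolP (proj S' != setT)) => [np1|/negPn/eqP p1]; first exact: key.
case: (boolP (proj (~: S') != setT)) => [np2|/negPn/eqP p2].
  rewrite -cutG'C; apply: key np2.
  by apply: contra_neq nT => h; rewrite -(setCK S') h setC0.
have two : forall p, exists y z, [/\ y \in S', z \notin S', (val y).1 = p & (val z).1 = p].
  move=> p.
  have : p \in proj S' by rewrite p1 inE.
  rewrite inE => /existsP [y /andP [yS /eqP y1]].
  have : p \in proj (~: S') by rewrite p2 inE.
  rewrite inE => /existsP [z /andP [zS /eqP z1]].
  by exists y, z; split => //; rewrite inE in zS.
case/set0Pn: ne => a0 _.
have [fE _] := nodeP a0.
have [a [b [_ _ hab _ _]]] := emb_edge fE.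
have [y1 [z1 [y1S z1S y11 z11]]] := two (val a).1.
have [y2 [z2 [y2S z2S y21 z21]]] := two (val b).1.
have e1 := Cl_clique y1S z1S (etrans y11 (esym z11)).
have e2 := Cl_clique y2S z2S (etrans y21 (esym z21)).
have ne12 : [set y1; z1] != [set y2; z2].
  apply/negP => /eqP h.
  have : y1 \in [set y2; z2] by rewrite -h !inE eqxx.
  rewrite !inE => /orP [] /eqP h'; move: hab; by rewrite -y11 h' ?y21 ?z21 eqxx.
have c2 : (2 <= #|Cl S'|)%N.
  have := cards2 [set y1; z1] [set y2; z2]; rewrite ne12 => <-; apply: subset_leq_card; apply/subsetP => e.
  by case/set2P => ->.
rewrite cut_val.
have s0 : 0 <= \sum_(f in E) (if #|emb f :&: S'| == 1%N then x f else 0).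
  apply: sumr_ge0 => f fE'; case: ifP => // _; by case/andP: (xb f fE').
have : (2 : R) <= (#|Cl S'|)%:R by rewrite ler_nat.
lra.
Qed.


Lemma part' (c x : {set V} -> R) :
  (forall f, f \in E -> 0 <= x f <= 1) ->
  (forall S', S' != set0 -> S' != setT -> 2 <= xsum (cutG adj' S') (infl_x x)) ->
  forall (w : V') (P : {set {set V'}}),
     partition P (setT :\ w) ->
     (forall a, a != w -> exists2 B, B \in P & comp0_minus adj' (infl_cost c) w a \subset B) ->
     (#|P|%:R - 1 <= xsum (cross_edges adj' w P) (infl_x x)).
Proof.
move=> xb cut w P hP hcomp.
set x' := infl_x x.
have x'0 : forall e, e \in E' -> 0 <= x' e by move=> e eE; case/andP: (x'_bounds xb eE).
have cr0 : 0 <= xsum (cross_edges adj' w P) x'.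
  rewrite /cross_edges xsum_set; apply: sumr_ge0 => e eE; case: ifP => // _; exact: x'0.
case: (leqP #|P| 1) => [P1 | P2].
  have : (#|P|%:R : R) <= 1 by rewrite lern1.
  lra.
move: hP => /and3P [/eqP cov triv n0].
have notw : forall B a, B \in P -> a \in B -> a != w.
  move=> B a BP aB; have : a \in cover P by apply: (subsetP (bigcup_sup _ BP)).
  by rewrite cov !inE => /andP [].
have uniqB : forall B1 B2 a, B1 \in P -> B2 \in P -> a \in B1 -> a \in B2 -> B1 = B2.
  move=> B1 B2 a B1P B2P a1 a2; apply/eqP; apply: contraT => ne.
  have := disjoint_setI0 ((trivIsetP triv) B1 B2 B1P B2P ne).
  by move/setP/(_ a); rewrite !inE a1 a2.
have nonempty : forall B, B \in P -> exists a, a \in B.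
  move=> B BP; apply/set0Pn; by apply: contraNneq n0 => <-.
have [B0 B0P B0cl] : exists2 B0, B0 \in P &
    forall b, b != w -> (val b).1 = (val w).1 -> b \in B0.
  case: (pickP (fun b : V' => (b != w) && ((val b).1 == (val w).1))) =>
      [a /andP [aw /eqP a1] | none].
    have [B0 B0P sub] := hcomp a aw.
    exists B0 => // b bw b1; apply: (subsetP sub); rewrite inE bw /=.
    case: (b =P a) => [-> | ba]; first exact: connect0.
    apply: connect1; rewrite /adj0_minus aw bw !andbT.
    have ab1 : (val a).1 = (val b).1 by rewrite a1 b1.
    rewrite /infl_cost origin_clique // eqxx andbT /infl_adj ab1 eqxx /=.
    rewrite andbF orbF; apply/eqP => h; apply: ba; symmetry; exact: node_eq.
  have : (0 < #|P|)%N by apply: leq_trans P2.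
  rewrite card_gt0 => /set0Pn [B0 B0P]; exists B0 => // b bw /eqP b1.
  by have := none b; rewrite bw b1.
pose g B := if B == B0 then B :|: [set w] else B.
have gmem : forall a B, (a \in g B) = (a \in B) || ((B == B0) && (a == w)).
  move=> a B; rewrite /g; case: eqP => _; by rewrite ?inE ?orbF.
have memw : forall B, B \in P -> (w \in g B) = (B == B0).
  move=> B BP; rewrite gmem eqxx andbT.
  case wB: (w \in B) => //; by have := notw _ _ BP wB; rewrite eqxx.
have memB1 : forall b B B1, B \in P -> B1 \in P -> b \in B1 -> (b \in g B) = (B == B1).
  move=> b B B1 BP B1P bB1; rewrite gmem (negbTE (notw _ _ B1P bB1)) andbF orbF.
  apply/idP/eqP => [bB | ->] //; exact: uniqB BP B1P bB bB1.
have gunique : forall B1 B2 a, B1 \in P -> B2 \in P -> a \in g B1 -> a \in g B2 -> B1 = B2.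
  move=> B1 B2 a B1P B2P; case: (a =P w) => [-> | aw].
    by rewrite !memw // => /eqP -> /eqP ->.
  rewrite !gmem; move/eqP: aw => /negbTE ->; rewrite !andbF !orbF.
  exact: uniqB.
have cutB : forall B, B \in P -> 2 <= xsum (cutG adj' (g B)) x'.
  move=> B BP; apply: cut.
    have [a aB] := nonempty B BP; apply/set0Pn; exists a; by rewrite gmem aB.
  have : (0 < #|P :\ B|)%N by move: P2; rewrite (cardsD1 B) BP.
  rewrite card_gt0 => /set0Pn [B1]; rewrite !inE => /andP [B1B B1P].
  have [z zB1] := nonempty B1 B1P.
  have zg : z \notin g B.
    rewrite gmem negb_or (negbTE (notw _ _ B1P zB1)) andbF andbT.
    apply/negP => zB; move: B1B; by rewrite (uniqB _ _ _ B1P BP zB1 zB) eqxx.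
  by apply/negP => /eqP h; move: zg; rewrite h inE.
have one : forall a (y : R), 0 <= y -> \sum_(B in P) (if a \in g B then y else 0) <= y.
  move=> a y y0.
  case: (pickP (fun B => (B \in P) && (a \in g B))) => [B1 /andP [B1P aB1] | none].
    rewrite (bigD1 B1) //= aB1 big1 ?addr0 //.
    move=> B /andP [BP BB1]; case: ifP => // aB.
    by rewrite (gunique _ _ _ BP B1P aB aB1) eqxx in BB1.
  rewrite big1 // => B BP; by have := none B; rewrite BP /= => ->.
set w2 := (val w).2.
set p := fun e : {set V'} => (w \notin e) && ~~ [exists B in P, e \subset B].
have edge_bound : forall e, e \in E' ->
   \sum_(B in P) (if #|e :&: g B| == 1%N then x' e else 0)
   <= 2 * (if p e then x' e else 0) + 2 * (if e == emb w2 then x' e else 0).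
  move=> e eE.
  have y0 := x'0 e eE.
  have rhs0 : 0 <= 2 * (if p e then x' e else 0) + 2 * (if e == emb w2 then x' e else 0).
    by case: (p e); case: (e == emb w2); lra.
  have zero : forall a b, a != b -> e = [set a; b] ->
      (forall B, B \in P -> (a \in g B) = (b \in g B)) ->
      \sum_(B in P) (if #|e :&: g B| == 1%N then x' e else 0)
      <= 2 * (if p e then x' e else 0) + 2 * (if e == emb w2 then x' e else 0).
    move=> a b ab ee h; rewrite big1 // => B BP; by rewrite ee card2I // h // eqxx.
  have big2 : forall a b, a != b -> e = [set a; b] -> (p e || (e == emb w2)) ->
      \sum_(B in P) (if #|e :&: g B| == 1%N then x' e else 0)
      <= 2 * (if p e then x' e else 0) + 2 * (if e == emb w2 then x' e else 0).
    move=> a b ab ee pe.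
    apply: (le_trans (y := x' e + x' e)); last by case/orP: pe => ->; case: (p e); case: (e == emb w2); lra.
    apply: (le_trans (y := \sum_(B in P) ((if a \in g B then x' e else 0) + (if b \in g B then x' e else 0)))).
      apply: ler_sum => B _; rewrite {1}ee card2I //.
      by case: (a \in g B); case: (b \in g B) => /=; lra.
    rewrite big_split /=; apply: lerD; exact: one.
  have inside : forall a b, a != b -> e = [set a; b] -> (exists2 B1, B1 \in P & e \subset B1) ->
      forall B, B \in P -> (a \in g B) = (b \in g B).
    move=> a b ab ee [B1 B1P sub] B BP.
    have aB1 : a \in B1 by apply: (subsetP sub); rewrite ee !inE eqxx.
    have bB1 : b \in B1 by apply: (subsetP sub); rewrite ee !inE eqxx orbT.
    by rewrite (memB1 _ _ _ BP B1P aB1) (memB1 _ _ _ BP B1P bB1).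
  have generic : forall a b, a != b -> e = [set a; b] -> w \notin e ->
      \sum_(B in P) (if #|e :&: g B| == 1%N then x' e else 0)
      <= 2 * (if p e then x' e else 0) + 2 * (if e == emb w2 then x' e else 0).
    move=> a b ab ee we.
    case: (boolP [exists B in P, e \subset B]) => [/existsP [B1 /andP [B1P sub]] | nex].
      apply: (zero a b ab ee); apply: (inside a b ab ee); by exists B1.
    by apply: (big2 a b ab ee); rewrite /p we nex.
  case: (E'_cases eE) => [[a [b [ab a1b1 ee o]]] | [f fE ee]].
    case: (boolP (w \in e)) => [we | we]; last exact: (generic a b ab ee).
    apply: (zero a b ab ee) => B BP.
    move: we; rewrite ee !inE => /orP [] /eqP wa.
      have bw : b != w by rewrite wa eq_sym.
      rewrite -wa memw // (memB1 _ _ _ BP B0P) //.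
      by apply: B0cl => //; rewrite wa a1b1.
    have aw : a != w by rewrite wa.
    rewrite -wa memw // (memB1 _ _ _ BP B0P) //.
    by apply: B0cl => //; rewrite wa a1b1.
  have [a [b [_ _ hab eab _]]] := emb_edge fE.
  have ab : a != b by apply: contra_neq hab => ->.
  have ee' := etrans ee eab.
  case: (boolP (f == w2)) => [/eqP fw | fw].
    apply: (big2 a b ab ee'); by rewrite ee fw eqxx orbT.
  apply: (generic a b ab ee'); by rewrite ee in_emb eq_sym.
have sumB : (2 : R) * (#|P|)%:R <= \sum_(B in P) xsum (cutG adj' (g B)) x'.
  have := @ler_sum _ _ (index_enum _) (mem P) (fun _ => 2) (fun B => xsum (cutG adj' (g B)) x') cutB; rewrite sumr_const.
  by have -> : (2 : R) * (#|P|)%:R = 2 *+ #|P| by rewrite mulr_natr.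
have : \sum_(B in P) xsum (cutG adj' (g B)) x'
    <= 2 * xsum (cross_edges adj' w P) x' + 2 * x w2.
  rewrite /cutG.
  under eq_bigr => B _ do rewrite xsum_set.
  rewrite exchange_big /=.
  apply: (le_trans (y := \sum_(e in E') (2 * (if p e then x' e else 0) + 2 * (if e == emb w2 then x' e else 0)))).
    by apply: ler_sum => e eE; exact: edge_bound.
  rewrite big_split /= -!mulr_sumr /cross_edges xsum_set.
  have -> : \sum_(e in E') (if e == emb w2 then x' e else 0) = x w2.
    rewrite -big_mkcondr (big_pred1 (emb w2)).
      by rewrite /x' /infl_x origin_emb //; case: (nodeP w).
    move=> e /=; apply/andP/eqP => [[] _ /eqP // | ->]; split => //.
    by apply: emb_in_E'; case: (nodeP w).
  by rewrite lexx.
have : x w2 <= 1 by case: (nodeP w) => w2E _; case/andP: (xb _ w2E).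
lra.
Qed.

End Infl.

Unset Implicit Arguments.

Theorem mainTheorem9 (R : realFieldType) (V : finType) (adj : rel V)
  (c x : {set V} -> R) :
  simple_graph adj ->
  (forall e, e \in edgesG adj -> 0 <= c e) ->
  P_EC adj x ->
  P_NC (@infl_adj V adj) (infl_cost c) (infl_x x) /\
  costG (@infl_adj V adj) (infl_cost c) (infl_x x) = costG adj c x.
Proof.
move=> sg _ [hcut hb].
have c' := cut' sg hcut hb.
split; last exact: cost_eq.
split; first by split; [exact: c' | exact: x'_bounds].
move=> w P; exact: (part' sg (c := c) hb c').
Qed.
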